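(* Let $q>9$ be an odd prime power which is a square, and let $a,b,c,d\in\mathbb{F}_q$ with $a\neq 0$. Put $\ell(x)=ax^{\sqrt{q}+1}+dx^{\sqrt{q}}+bx+c$. If there is a subset $D\subseteq\mathbb{F}_q$ with $|D|>q-\sqrt{q}/2+1/2$ such that $\ell(x)$ is a square in $\mathbb{F}_q$ (i.e. $\ell(x)=y^2$ for some $y\in\mathbb{F}_q$) for every $x\in D$, then $a^{\sqrt{q}}b=d^{\sqrt{q}}a$. *)

(* Defs.v *)
From mathcomp Require Import all_boot all_order all_algebra all_field.
Set Implicit Arguments. Unset Strict Implicit. Unset Printing Implicit Defensive.

(* Main.v *)
Require Import Defs.
From mathcomp Require Import all_boot all_order all_algebra all_field all_solvable all_fingroup.
From mathcomp Require Import ring zify lra.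
Import GRing.Theory Num.Theory.
Local Open Scope ring_scope.
Set Implicit Arguments. Unset Strict Implicit.

Lemma card_roots_le (F : finFieldType) n (c : F) : (0 < n)%N ->
  (#|[set x : F | x ^+ n == c]| <= n)%N.
Proof.
move=> n0.
have p0 : ('X^n - c%:P : {poly F}) != 0.
  by rewrite -size_poly_eq0 size_XnsubC.
have := max_poly_roots p0 (rs := enum [set x : F | x ^+ n == c]).
rewrite enum_uniq size_XnsubC // -cardE ltnS; apply.
apply/allP => x; rewrite mem_enum inE => /eqP hx.
by rewrite rootE !hornerE hx subrr.
by [].
Qed.

Lemma card_img_ge (T T' : finType) (f : T -> T') (A : {set T}) m :
  (forall y, #|[set x in A | f x == y]| <= m)%N -> (#|A| <= #|f @: A| * m)%N.
Proof.
move=> hm.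
rewrite -sum1_card (partition_big_imset f) /=.
rewrite -sum_nat_const; apply: leq_sum => y _.
apply: leq_trans (hm y).
by rewrite -sum1_card; apply: eq_leq; apply: eq_bigl => x; rewrite inE.
Qed.

Lemma no3 (T : finType) (S : {set T}) :
  (forall x y z, x \in S -> y \in S -> z \in S -> x != y -> x != z -> y != z -> False) ->
  (#|S| <= 2)%N.
Proof.
move=> h; rewrite leqNgt; apply/negP => hS.
have /set0Pn [x xS] : S != set0 by rewrite -card_gt0; apply: leq_trans hS.
have hS1 : (1 < #|S :\ x|)%N by rewrite (cardsD1 x S) xS in hS.
have /set0Pn [y /setD1P [yx yS]] : S :\ x != set0 by rewrite -card_gt0; apply: leq_trans hS1.
have hS2 : (0 < #|S :\ x :\ y|)%N.
  by rewrite (cardsD1 y (S :\ x)) !inE yx yS in hS1.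
have /set0Pn [z /setD1P [zy /setD1P [zx zS]]] : S :\ x :\ y != set0 by rewrite -card_gt0.
by apply: (h x y z) => //; rewrite eq_sym.
Qed.

Lemma frob_pnat (F : finFieldType) r : #|F| = (r * r)%N -> odd #|F| ->
  [pchar F].-nat r /\ (2 != 0 :> F).
Proof.
move=> hq hodd.
have [p pr pc] := finPcharP F.
have ab := fin_ring_pchar_abelem pc.
have pg := abelem_pgroup ab.
have pn : p.-nat #|F| by move: pg; rewrite /pgroup cardsT.
have pnr : p.-nat r by apply: pnat_dvd pn; rewrite hq dvdn_mulr.
split; first by rewrite (eq_pnat _ (pcharf_eq pc)).
apply/negP => /eqP h2.
have c2 : 2 \in [pchar F] by rewrite inE /= h2 eqxx.
have := pcharf_eq pc 2; rewrite c2 /= => /esym/eqP p2.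
have [k hk] := p_natP pn.
move: hodd; rewrite hk -p2 oddX /=.
case: k hk => [|k] //= hk _.
have := finNzRing_gt1 F; rewrite hk expn0 //.
Qed.

Lemma r_facts (F : finFieldType) r : #|F| = (r * r)%N -> odd #|F| -> (9 < #|F|)%N ->
  odd r /\ (4 < r)%N.
Proof.
move=> hq hodd h9; rewrite hq oddM andbb in hodd; split => //.
rewrite hq in h9; clear hq.
do 5 (case: r hodd h9 => [|r] //= hodd h9).
Qed.

Lemma r_pos (F : finFieldType) r : #|F| = (r * r)%N -> (0 < r)%N.
Proof. by case: r => //; rewrite muln0 => h; have := finNzRing_gt1 F; rewrite h. Qed.

Lemma frobD (F : finFieldType) r : #|F| = (r * r)%N -> odd #|F| ->
  forall x y : F, (x + y) ^+ r = x ^+ r + y ^+ r.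
Proof. by move=> hq hodd x y; rewrite exprDn_pchar // (frob_pnat hq hodd).1. Qed.

Lemma frob2 (F : finFieldType) r : #|F| = (r * r)%N -> forall x : F, (x ^+ r) ^+ r = x.
Proof. by move=> hq x; rewrite -exprM -hq expf_card. Qed.

Lemma frobN (F : finFieldType) r : #|F| = (r * r)%N -> odd #|F| ->
  forall x : F, (- x) ^+ r = - x ^+ r.
Proof.
move=> hq hodd x.
have r0 := r_pos hq.
apply/eqP; rewrite -subr_eq0 opprK -frobD // addNr expr0n; case: r r0 {hq hodd} => //.
Qed.

Lemma frobB (F : finFieldType) r : #|F| = (r * r)%N -> odd #|F| ->
  forall x y : F, (x - y) ^+ r = x ^+ r - y ^+ r.
Proof. by move=> hq hodd x y; rewrite frobD // frobN. Qed.

Lemma normK (F : finFieldType) r : #|F| = (r * r)%N -> forall u : F,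
  (u ^+ r.+1) ^+ r = u ^+ r.+1.
Proof. by move=> hq u; rewrite exprS exprMn frob2 // -exprS exprSr. Qed.

Lemma pow_unit (F : finFieldType) r : #|F| = (r * r)%N -> (0 < r)%N -> forall u : F, u != 0 ->
  u ^+ (r.+1 * r.-1) = 1.
Proof.
move=> hq r0 u u0.
have e : ((r.+1 * r.-1).+1 = r * r)%N by case: r r0 {hq} => // r _; rewrite /=; lia.
apply: (mulIf u0); rewrite mul1r -exprSr e -hq expf_card //.
Qed.


Lemma rp_pos (F : finFieldType) r : #|F| = (r * r)%N -> (0 < r.-1)%N.
Proof.
move=> hq; have := finNzRing_gt1 F; rewrite hq.
by case: r {hq} => // [[]].
Qed.

Lemma rr1 r : (0 < r)%N -> (r * r - 1 = r.-1 * r.+1)%N.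
Proof. by case: r => // r _; rewrite /=; lia. Qed.

Lemma norm_surj (F : finFieldType) r : #|F| = (r * r)%N ->
  [set (u : F) ^+ r.+1 | u in [set~ 0]] = [set x : F | x ^+ r.-1 == 1].
Proof.
move=> hq; have r0 := r_pos hq.
set I := imset _ _; set K := [set x | _].
have sub : I \subset K.
  apply/subsetP => y /imsetP [u]; rewrite !inE => u0 ->.
  by rewrite -exprM pow_unit.
have h1 := card_img_ge (f := fun u : F => u ^+ r.+1) (A := [set~ 0]) (m := r.+1).
have h2 : (#|I| * r.+1 >= r * r - 1)%N.
  have -> : (r * r - 1 = #|F|.-1)%N by rewrite hq subn1.
  rewrite -(cardsC1 (0 : F)); apply: h1 => y.
  apply: leq_trans (card_roots_le y (ltn0Sn r)).
  by apply: subset_leq_card; apply/subsetP => x; rewrite !inE => /andP [].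
have h3 : (#|K| <= r.-1)%N by apply: card_roots_le; apply: rp_pos hq.
apply/eqP; rewrite eqEcard sub /=.
apply: leq_trans h3 _.
have e := rr1 r0.
by rewrite e leq_pmul2r in h2.
Qed.

Lemma norm_surj' (F : finFieldType) r : #|F| = (r * r)%N -> forall y : F,
  y ^+ r.-1 = 1 -> exists u, u != 0 /\ u ^+ r.+1 = y.
Proof.
move=> hq y hy.
have : y \in [set x : F | x ^+ r.-1 == 1] by rewrite inE hy.
rewrite -norm_surj // => /imsetP [u]; rewrite !inE => u0 ->; by exists u.
Qed.

Lemma cardK (F : finFieldType) r : #|F| = (r * r)%N ->
  (r <= #|[set t : F | t ^+ r == t]|)%N.
Proof.
move=> hq; have r0 := r_pos hq.
have hK : (r.-1 <= #|[set x : F | x ^+ r.-1 == 1%R]|)%N.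
  rewrite -norm_surj //.
  have h1 := card_img_ge (f := fun u : F => u ^+ r.+1) (A := [set~ 0]) (m := r.+1).
  have h2 : (#|[set (u : F) ^+ r.+1 | u in [set~ (0:F)%R]]| * r.+1 >= r * r - 1)%N.
    have -> : (r * r - 1 = #|F|.-1)%N by rewrite hq subn1.
  rewrite -(cardsC1 (0 : F)); apply: h1 => y.
    apply: leq_trans (card_roots_le y (ltn0Sn r)).
    by apply: subset_leq_card; apply/subsetP => x; rewrite !inE => /andP [].
  have e := rr1 r0.
  by rewrite e leq_pmul2r in h2.
have sub : 0 |: [set x : F | x ^+ r.-1 == 1] \subset [set t : F | t ^+ r == t].
  apply/subsetP => x; rewrite !inE => /orP [/eqP -> | /eqP h].
    by rewrite expr0n; case: r r0 {hq hK}.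
  by case: r r0 {hq hK} h => // r _ h; rewrite exprS /= h mulr1.
apply: leq_trans (subset_leq_card sub).
rewrite cardsU1 inE expr0n.
have r1 := rp_pos hq.
case: r r1 {hq sub r0} hK => // [[|r]] //= _ hK.
by rewrite eq_sym oner_eq0 add1n ltnS.
Qed.

Lemma circle_big (F : finFieldType) r : #|F| = (r * r)%N -> forall rho c : F,
  rho ^+ r.-1 = 1 -> (r.+1 <= #|[set u : F | (u + c) ^+ r.+1 == rho]|)%N.
Proof.
move=> hq rho c hrho; have r0 := r_pos hq.
have hC : (r.+1 <= #|[set z : F | z ^+ r.+1 == 1%R]|)%N.
  have h1 := card_img_ge (f := fun u : F => u ^+ r.-1) (A := [set~ 0]) (m := r.-1).
  have h2 : (#|[set (u : F) ^+ r.-1 | u in [set~ (0:F)%R]]| * r.-1 >= r * r - 1)%N.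
    have -> : (r * r - 1 = #|F|.-1)%N by rewrite hq subn1.
  rewrite -(cardsC1 (0 : F)); apply: h1 => y.
    apply: leq_trans (card_roots_le y (rp_pos hq)).
    by apply: subset_leq_card; apply/subsetP => x; rewrite !inE => /andP [].
  have sub : [set (u : F) ^+ r.-1 | u in [set~ 0]] \subset [set z : F | z ^+ r.+1 == 1].
    apply/subsetP => y /imsetP [u]; rewrite !inE => u0 ->.
    by rewrite -exprM mulnC pow_unit.
  have e : (r * r - 1 = r.+1 * r.-1)%N by rewrite rr1 // mulnC.
  rewrite e leq_pmul2r in h2; last by apply: rp_pos hq.
  by apply: leq_trans h2 (subset_leq_card sub).
have [u0 [u00 hu0]] := norm_surj' hq hrho.
apply: leq_trans hC _.
rewrite -(card_imset _ (f := fun z => u0 * z - c)); last first.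
  by move=> z1 z2 /addIr /(mulfI u00).
apply: subset_leq_card; apply/subsetP => y /imsetP [z]; rewrite !inE => /eqP hz ->.
by rewrite subrK exprMn hu0 hz mulr1.
Qed.

Definition issq (F : finFieldType) (x : F) : bool := [exists y : F, y ^+ 2 == x].

Lemma issqP (F : finFieldType) (x : F) : reflect (exists y, y ^+ 2 = x) (issq x).
Proof.
apply: (iffP existsP) => [[y /eqP h] | [y h]]; exists y => //; exact/eqP.
Qed.

Lemma K_sq (F : finFieldType) r : #|F| = (r * r)%N -> odd #|F| -> forall t : F,
  t ^+ r = t -> issq t.
Proof.
move=> hq hodd t ht.
have [odr _] : odd r /\ True.
  by split => //; move: hodd; rewrite hq oddM andbb.
have r0 := r_pos hq.
case: (eqVneq t 0) => [-> | t0]; first by apply/issqP; exists 0; rewrite expr0n.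
have h1 : t ^+ r.-1 = 1.
  apply: (mulIf t0); rewrite mul1r -exprSr prednK //.
have [u [u0 hu]] := norm_surj' hq h1.
apply/issqP; exists (u ^+ (r.+1)./2).
rewrite -exprM -hu; congr (_ ^+ _).
have := odd_double_half r.+1; rewrite /= odr /= add0n => h.
by rewrite muln2 h.
Qed.

Lemma sq_div (F : finFieldType) (x k : F) : issq x -> issq k -> k != 0 -> issq (x / k).
Proof.
move=> /issqP [y hy] /issqP [z hz] k0; apply/issqP; exists (y / z).
by rewrite expr_div_n hy hz.
Qed.

Lemma nonsq_mul (F : finFieldType) (k l : F) : ~~ issq k -> l != 0 -> ~~ issq (k * l ^+ 2).
Proof.
move=> hk l0; apply/negP => /issqP [y hy]; move/negP: hk; apply; apply/issqP.
exists (y / l); rewrite expr_div_n hy mulfK //; exact: expf_neq0.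
Qed.

Lemma nonsq_exists (F : finFieldType) r : #|F| = (r * r)%N -> odd #|F| ->
  exists k : F, ~~ issq k.
Proof.
move=> hq hodd.
have [_ two0] := frob_pnat hq hodd.
apply/existsP; rewrite -negb_forall; apply/negP => /forallP hall.
have himg : [set y ^+ 2 | y in [set: F]] = [set: F].
  apply/eqP; rewrite eqEsubset subsetT /=; apply/subsetP => x _.
  have /issqP [y hy] := hall x; apply/imsetP; exists y => //.
have : #|[set y ^+ 2 | y in [set: F]]| == #|[set: F]| by rewrite himg.
move/imset_injP => hinj.
have := hinj 1 (-1) (in_setT _) (in_setT _); rewrite expr1n sqrrN expr1n => h.
have := h erefl => /eqP; rewrite -subr_eq0 opprK => /eqP h2.
by move: two0; rewrite -h2 eqxx.
Qed.

Lemma quad3 (F : fieldType) (A B C n1 n2 n3 : F) : A != 0 -> n1 != n2 -> n1 != n3 -> n2 != n3 ->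
  A * n1 ^+ 2 + B * n1 + C = 0 -> A * n2 ^+ 2 + B * n2 + C = 0 -> A * n3 ^+ 2 + B * n3 + C = 0 -> False.
Proof.
move=> A0 d12 d13 d23 e1 e2 e3.
have h12 : (n1 - n2) * (A * (n1 + n2) + B) = (A * n1 ^+ 2 + B * n1 + C) - (A * n2 ^+ 2 + B * n2 + C) by ring.
have h13 : (n1 - n3) * (A * (n1 + n3) + B) = (A * n1 ^+ 2 + B * n1 + C) - (A * n3 ^+ 2 + B * n3 + C) by ring.
rewrite e1 e2 subrr in h12; rewrite e1 e3 subrr in h13.
move/eqP: h12; rewrite mulf_eq0 subr_eq0 (negbTE d12) /= => /eqP h12.
move/eqP: h13; rewrite mulf_eq0 subr_eq0 (negbTE d13) /= => /eqP h13.
have : A * (n2 - n3) = 0.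
  have -> : A * (n2 - n3) = (A * (n1 + n2) + B) - (A * (n1 + n3) + B) by ring.
  by rewrite h12 h13 subrr.
by move/eqP; rewrite mulf_eq0 subr_eq0 (negbTE A0) (negbTE d23).
Qed.

Lemma root_fact (F : finFieldType) r : #|F| = (r * r)%N -> odd #|F| -> forall (a e f u : F),
  e != 0 -> a * u ^+ r.+1 + e * u + f = 0 ->
  (a * a ^+ r) * (u ^+ r.+1) ^+ 2 + (a * f ^+ r + a ^+ r * f - e * e ^+ r) * u ^+ r.+1
    + f * f ^+ r = 0 /\ u = - (a * u ^+ r.+1 + f) / e.
Proof.
move=> hq hodd a e f u e0 hL.
have [n nE] : exists n, n = u ^+ r.+1 by eexists.
rewrite -nE in hL *.
have hn : n ^+ r = n by rewrite nE; apply: normK.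
have eu : e * u = - (a * n + f).
  by apply: (addIr (a * n + f)); rewrite addNr -hL; ring.
split; last by rewrite -eu mulrC mulKf.
have eu' : e ^+ r * u ^+ r = - (a ^+ r * n + f ^+ r).
  by rewrite -exprMn eu (frobN hq hodd) (frobD hq hodd) exprMn hn.
have nu : n = u * u ^+ r by rewrite nE exprS.
have : (e * e ^+ r) * n = (a * n + f) * (a ^+ r * n + f ^+ r).
  have -> : (e * e ^+ r) * n = (e * u) * (e ^+ r * u ^+ r) by rewrite {1}nu; ring.
  by rewrite eu eu'; ring.
move=> h; apply/eqP; rewrite -subr_eq0; apply/eqP.
have -> : a * a ^+ r * n ^+ 2 + (a * f ^+ r + a ^+ r * f - e * e ^+ r) * n + f * f ^+ r - 0
  = (a * n + f) * (a ^+ r * n + f ^+ r) - (e * e ^+ r) * n by ring.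
by rewrite h subrr.
Qed.

Lemma roots_le2 (F : finFieldType) r : #|F| = (r * r)%N -> odd #|F| -> forall (a e f : F),
  a != 0 -> e != 0 -> (#|[set u : F | (a * u ^+ r.+1 + e * u + f == 0)%R]| <= 2)%N.
Proof.
move=> hq hodd a e f a0 e0; apply: no3 => u1 u2 u3; rewrite !inE => /eqP h1 /eqP h2 /eqP h3 d12 d13 d23.
have [q1 x1] := root_fact hq hodd e0 h1.
have [q2 x2] := root_fact hq hodd e0 h2.
have [q3 x3] := root_fact hq hodd e0 h3.
have Aa : a * a ^+ r != 0 by rewrite mulf_neq0 // expf_neq0.
have dn : forall v w : F, v != w -> v = - (a * v ^+ r.+1 + f) / e -> w = - (a * w ^+ r.+1 + f) / e ->
    v ^+ r.+1 != w ^+ r.+1.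
  by move=> v w vw hv hw; apply: contra vw => /eqP hvw; rewrite hv hw hvw.
exact: (quad3 Aa (dn _ _ d12 x1 x2) (dn _ _ d13 x1 x3) (dn _ _ d23 x2 x3) q1 q2 q3).
Qed.

Lemma count_final (T : finType) (NS Z A : {set T}) k :
  (k <= #|A|)%N -> (#|Z| <= 2)%N -> A \subset NS :|: Z -> (k - 2 <= #|NS|)%N.
Proof.
move=> hA hZ sub.
have := leq_card_setU NS Z; case => hU _.
have := subset_leq_card sub => hs.
lia.
Qed.

Lemma case_nonsq (F : finFieldType) r : #|F| = (r * r)%N -> odd #|F| -> forall (a e f : F),
  a != 0 -> e != 0 -> ~~ issq a ->
  (r - 2 <= #|[set u : F | ~~ issq (a * u ^+ r.+1 + e * u + f)%R]|)%N.
Proof.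
move=> hq hodd a e f a0 e0 ha.
pose phi t := (a * t - f) / e.
apply: (count_final (A := phi @: [set t : F | t ^+ r == t]) _ (roots_le2 hq hodd f a0 e0)).
  rewrite card_imset; first exact: cardK.
  move=> t1 t2; rewrite /phi => /(mulIf (invr_neq0 e0)) /addIr; exact: mulfI.
apply/subsetP => u /imsetP [t]; rewrite inE => /eqP ht ->.
set v := phi t.
have ev : e * v = a * t - f by rewrite /v /phi mulrC divfK.
have Lv : a * v ^+ r.+1 + e * v + f = a * (v ^+ r.+1 + t) by rewrite ev; ring.
have hk : (v ^+ r.+1 + t) ^+ r = v ^+ r.+1 + t by rewrite (frobD hq hodd) normK // ht.
rewrite !inE Lv mulf_eq0 (negbTE a0) /=.
case: (eqVneq (v ^+ r.+1 + t) 0) => [-> | k0]; first by rewrite orbT.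
rewrite orbF; apply/negP => hsq; move/negP: ha; apply.
have := sq_div hsq (K_sq hq hodd hk) k0; by rewrite mulfK.
Qed.

Lemma pick_out (T : finType) (S : {set T}) : (#|S| < #|T|)%N -> exists x, x \notin S.
Proof.
move=> h; apply/existsP; rewrite -negb_forall; apply/negP => /forallP hall.
have : S = setT by apply/setP => x; rewrite hall inE.
by move=> hS; move: h; rewrite hS cardsT ltnn.
Qed.

Lemma good_kappa (F : finFieldType) r : #|F| = (r * r)%N -> odd #|F| -> (4 < r)%N ->
  forall (a e f : F), a != 0 -> e != 0 ->
  exists k : F, ~~ issq k /\
   (k ^+ r.-1 * a - a ^+ r) * (f ^+ r - k ^+ r.-1 * f) != e * e ^+ r * k ^+ r.-1.
Proof.
move=> hq hodd r4 a e f a0 e0.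
have [k0 hk0] := nonsq_exists hq hodd.
have k00 : k0 != 0 by apply: contraNneq hk0 => ->; apply/issqP; exists 0; rewrite expr0n.
have r0 := r_pos hq.
have Ee : e * e ^+ r != 0 by rewrite mulf_neq0 // expf_neq0.
case: (eqVneq f 0) => [f0 | f0].
  exists k0; split => //; rewrite f0 expr0n /=.
  have -> : (r == 0)%N = false by apply/negbTE; rewrite -lt0n.
  by rewrite mulr0 subrr mulr0 eq_sym mulf_neq0 // expf_neq0.
set m := (2 * r.-1)%N.
have m0 : (0 < m)%N by rewrite /m; have := rp_pos hq; lia.
have [l2 hl2] : exists l, l \notin 0 |: [set x : F | x ^+ m == 1].
  apply: pick_out; rewrite cardsU1.
  apply: leq_ltn_trans (leq_add (leq_b1 _) (card_roots_le 1 m0)) _; rewrite hq /m.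
  have hr : (4 * r < r * r)%N by rewrite ltn_pmul2r; lia.
  move: hr; generalize (r * r)%N => N; lia.
move: hl2; rewrite !inE negb_or => /andP [l20 l2m].
have [l3 hl3] : exists l, l \notin 0 |: ([set x : F | x ^+ m == 1] :|: [set x : F | x ^+ m == l2 ^+ m]).
  apply: pick_out; rewrite cardsU1.
  have h1 := card_roots_le (1:F) m0; have h2 := card_roots_le (l2 ^+ m) m0.
  have := leq_card_setU [set x : F | x ^+ m == 1] [set x : F | x ^+ m == l2 ^+ m]; case=> hU _.
  have h3 := leq_b1 (0 \notin [set x : F | x ^+ m == 1] :|: [set x : F | x ^+ m == l2 ^+ m]).
  move: h1 h2 hU h3; rewrite hq /m.
  have hr : (4 * r < r * r)%N by rewrite ltn_pmul2r; lia.
  move: hr; generalize (r * r)%N => N hr h1 h2 hU h3.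
  move: h3; set X := nat_of_bool _; set Y := #|_ :|: _|; move: hU; rewrite -/Y.
  move: X Y h1 h2 hr; generalize #|[set x : F | x ^+ (2 * r.-1) == 1]| #|[set x : F | x ^+ (2 * r.-1) == l2 ^+ (2 * r.-1)]|; lia.
move: hl3; rewrite !inE !negb_or => /andP [l30 /andP [l3m l32]].
pose mu (k : F) := k ^+ r.-1.
have muE : forall l : F, mu (k0 * l ^+ 2) = mu k0 * l ^+ m.
  by move=> l; rewrite /mu exprMn -exprM.
pose P (x : F) := (x * a - a ^+ r) * (f ^+ r - x * f) - e * e ^+ r * x.
have PE : forall x, P x = (- (a * f)) * x ^+ 2 + (a * f ^+ r + a ^+ r * f - e * e ^+ r) * x + (- (a ^+ r * f ^+ r)).
  by move=> x; rewrite /P; ring.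
have bad : forall k, ~~ issq k -> (k ^+ r.-1 * a - a ^+ r) * (f ^+ r - k ^+ r.-1 * f) = e * e ^+ r * k ^+ r.-1 -> P (mu k) = 0.
  by move=> k _ h; rewrite /P /mu h subrr.
have [h1|h1] := eqVneq ((k0 ^+ r.-1 * a - a ^+ r) * (f ^+ r - k0 ^+ r.-1 * f)) (e * e ^+ r * k0 ^+ r.-1); last by exists k0.
have [h2|h2] := eqVneq (((k0 * l2 ^+ 2) ^+ r.-1 * a - a ^+ r) * (f ^+ r - (k0 * l2 ^+ 2) ^+ r.-1 * f)) (e * e ^+ r * (k0 * l2 ^+ 2) ^+ r.-1); last by exists (k0 * l2 ^+ 2); split => //; apply: nonsq_mul.
have [h3|h3] := eqVneq (((k0 * l3 ^+ 2) ^+ r.-1 * a - a ^+ r) * (f ^+ r - (k0 * l3 ^+ 2) ^+ r.-1 * f)) (e * e ^+ r * (k0 * l3 ^+ 2) ^+ r.-1); last by exists (k0 * l3 ^+ 2); split => //; apply: nonsq_mul.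
exfalso.
have q1 := bad _ hk0 h1.
have q2 := bad _ (nonsq_mul hk0 l20) h2.
have q3 := bad _ (nonsq_mul hk0 l30) h3.
rewrite PE in q1; rewrite PE in q2; rewrite PE in q3.
have mk0 : mu k0 != 0 by rewrite /mu expf_neq0.
have A0 : - (a * f) != 0 by rewrite oppr_eq0 mulf_neq0.
rewrite !muE in q2 q3.
have d12 : mu k0 != mu k0 * l2 ^+ m.
  by apply: contra l2m => /eqP h; apply/eqP; apply: (mulfI mk0); rewrite mulr1 -h.
have d13 : mu k0 != mu k0 * l3 ^+ m.
  by apply: contra l3m => /eqP h; apply/eqP; apply: (mulfI mk0); rewrite mulr1 -h.
have d23 : mu k0 * l2 ^+ m != mu k0 * l3 ^+ m.
  by apply: contra l32 => /eqP h; rewrite (mulfI mk0 h).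
exact: (quad3 A0 d12 d13 d23 q1 q2 q3).
Qed.

Lemma sq_mul (F : finFieldType) (x y : F) : issq x -> issq y -> issq (x * y).
Proof.
move=> /issqP [u hu] /issqP [v hv]; apply/issqP; exists (u * v); by rewrite exprMn hu hv.
Qed.

Lemma case_sq (F : finFieldType) r : #|F| = (r * r)%N -> odd #|F| -> (4 < r)%N ->
  forall (a e f : F), a != 0 -> e != 0 -> issq a ->
  (r - 2 <= #|[set u : F | ~~ issq (a * u ^+ r.+1 + e * u + f)%R]|)%N.
Proof.
move=> hq hodd r4 a e f a0 e0 ha.
have [k [hk hgood]] := good_kappa hq hodd r4 f a0 e0.
have k0 : k != 0 by apply: contraNneq hk => ->; apply/issqP; exists 0; rewrite expr0n.
have r0 := r_pos hq.
have fD := frobD hq hodd; have fB := frobB hq hodd; have fN := frobN hq hodd; have f2 := frob2 hq.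
have A0 : a ^+ r != 0 by rewrite expf_neq0.
have K0 : k ^+ r != 0 by rewrite expf_neq0.
have hD : k ^+ r * a - k * a ^+ r != 0.
  apply/negP => /eqP hD; move/negP: hk; apply.
  have h1 : (k / a) ^+ r = k / a.
    rewrite exprMn exprVn; apply/eqP; rewrite eqr_div ?invr_eq0 //.
    by apply/eqP; move/eqP: hD; rewrite subr_eq0 => /eqP ->; rewrite mulrC.
  by have := sq_mul (K_sq hq hodd h1) ha; rewrite divfK.
have hD' : k * a ^+ r - k ^+ r * a != 0 by rewrite -opprB oppr_eq0.
pose g := k ^+ r * e / (k ^+ r * a - k * a ^+ r).
pose g' := k * e ^+ r / (k * a ^+ r - k ^+ r * a).
pose rho := (k * f ^+ r - k ^+ r * f) / (k ^+ r * a - k * a ^+ r) + g * g'.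
have hg : g ^+ r = g'.
  by rewrite /g /g' !exprMn exprVn fB !exprMn !f2.
have hg' : g' ^+ r = g.
  by rewrite /g /g' !exprMn exprVn fB !exprMn !f2.
have hrr : rho ^+ r = rho.
  rewrite /rho fD [(g * g') ^+ r]exprMn hg hg' exprMn exprVn !fB !exprMn !f2 /g /g'.
  by field; rewrite hD hD'.
have hK : k ^+ r = k ^+ r.-1 * k by rewrite -exprSr prednK.
have hrho0 : rho != 0.
  apply: contra hgood => /eqP h0.
  have e1 : (k ^+ r * a - k * a ^+ r) ^+ 2 * rho =
      k ^+ 2 * ((k ^+ r.-1 * a - a ^+ r) * (f ^+ r - k ^+ r.-1 * f) - e * e ^+ r * k ^+ r.-1).
    rewrite /rho /g /g' hK; field.
    by rewrite -hK hD hD'.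
  move: e1; rewrite h0 mulr0 => /esym/eqP; rewrite mulf_eq0 expf_eq0 /= (negbTE k0) /= subr_eq0 //.
have rho1 : rho ^+ r.-1 = 1.
  by apply: (mulIf hrho0); rewrite mul1r -exprSr prednK.
have hC := circle_big hq g' rho1.
have hZ := roots_le2 hq hodd f a0 e0.
suff sub : [set u : F | (u + g') ^+ r.+1 == rho] \subset
    [set u : F | ~~ issq (a * u ^+ r.+1 + e * u + f)%R] :|: [set u : F | (a * u ^+ r.+1 + e * u + f == 0)%R].
  have := count_final hC hZ sub; lia.
apply/subsetP => u; rewrite !inE => /eqP hu.
set L := a * u ^+ r.+1 + e * u + f.
have hL : L ^+ r = a ^+ r * (u * u ^+ r) + e ^+ r * u ^+ r + f ^+ r.
  by rewrite /L !fD !exprMn normK // exprS.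
have hu' : (u + g') * (u ^+ r + g) = rho by rewrite -hg' -fD -exprS.
have key : k * L ^+ r = k ^+ r * L.
  apply/eqP; rewrite -subr_eq0; apply/eqP.
  have -> : k * L ^+ r - k ^+ r * L = - (k ^+ r * a - k * a ^+ r) * ((u + g') * (u ^+ r + g) - rho).
    rewrite hL /L exprS /rho /g /g'; field.
    by rewrite hD hD'.
  by rewrite hu' subrr mulr0.
case: (eqVneq L 0) => [-> | L0]; first by rewrite ?eqxx orbT.
rewrite orbF; apply/negP => hsq; move/negP: hk; apply.
have hkk : (L / k) ^+ r = L / k.
  rewrite exprMn exprVn; apply: (mulfI K0); rewrite mulrCA divff // mulr1.
  apply: (mulfI k0); rewrite key; field.
  by [] || rewrite k0.
have kk0 : L / k != 0 by rewrite mulf_neq0 ?invr_eq0.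
have := sq_div hsq (K_sq hq hodd hkk) kk0.
suff -> : L / (L / k) = k by [].
by field; rewrite L0 k0.
Qed.

Unset Implicit Arguments.

Theorem lemma2 (F : finFieldType) (r : nat)
  (hq : #|F| = (r * r)%N) (hodd : odd #|F|) (h9 : (9 < #|F|)%N)
  (a b c d : F) (ha : a != 0) (D : {set F})
  (hD : (#|D|%:R : rat) > #|F|%:R - r%:R / 2 + 1 / 2)
  (hsq : forall x, x \in D ->
     exists y : F, a * x ^+ (r + 1) + d * x ^+ r + b * x + c = y ^+ 2) :
  a ^+ r * b = d ^+ r * a.
Proof.
have [odr r4] := r_facts hq hodd h9.
apply/eqP; apply/negPn/negP => hne.
pose h := d / a.
pose e := b - a * h ^+ r.
pose f := c - a * h ^+ r.+1 - e * h.
have A0 : a ^+ r != 0 by rewrite expf_neq0.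
have e0 : e != 0.
  apply: contra hne => /eqP e0; apply/eqP.
  move: e0; rewrite /e /h exprMn exprVn => /eqP; rewrite subr_eq0 => /eqP ->.
  by field.
have hNS : (r - 2 <= #|[set u : F | ~~ issq (a * u ^+ r.+1 + e * u + f)%R]|)%N.
  case: (boolP (issq a)) => hsa.
    exact: case_sq.
  exact: case_nonsq.
have fD := frobD hq hodd.
have iden : forall x : F, a * x ^+ (r + 1) + d * x ^+ r + b * x + c
    = a * (x + h) ^+ r.+1 + e * (x + h) + f.
  move=> x; rewrite addn1 !exprS fD /f /e /h exprS; field.
  by [] || rewrite ha.
set NSL := [set u : F | ~~ issq (a * u ^+ r.+1 + e * u + f)%R] in hNS.
have sub : D \subset ~: ((fun u => u - h) @: NSL).
  apply/subsetP => x xD; rewrite inE; apply/imsetP => [[u]]; rewrite inE => hu hx.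
  have [y hy] := hsq x xD.
  move/negP: hu; apply; apply/issqP; exists y.
  by rewrite -hy iden hx subrK.
have hc := subset_leq_card sub.
have := cardsC ((fun u => u - h) @: NSL); rewrite card_imset; last by move=> u v /addIr.
move=> hC.
have hnat : (#|D| + r <= r * r + 2)%N.
  set C := #|~: _| in hc hC; set M := #|NSL| in hC hNS.
  move: hc hC hNS r4; rewrite hq; generalize (r * r)%N; lia.
have : (#|D|%:R + r%:R <= (r * r)%:R + 2 :> rat).
  by rewrite -natrD -[2]/(2%:R) -natrD ler_nat.
have : (5 <= r%:R :> rat) by rewrite -[5]/(5%:R) ler_nat.
rewrite hq in hD.
move=> h5 hle; move: hD h5 hle.
lra.
Qed.
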